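(* A general map $\mathcal M=(B,\sigma,\alpha)$ has a single component (i.e. is a map) if and only if $\mathcal M$ has a quasi-tree.
   Context: A general map is a triple $\mathcal M=(B,\sigma,\alpha)$ where $B$ is a finite set (of flags), $\sigma,\alpha$ are permutations of $B$, and $\alpha$ is a fixed-point-free involution. Its components are the orbits of the group $\langle\sigma,\alpha\rangle$ on $B$; it is a map if $\langle\sigma,\alpha\rangle$ acts transitively on $B$. The edges of $\mathcal M$ are the cycles of $\alpha$ (two-element sets); for $b\in B$ write $\underline b=\{b,\alpha(b)\}$. For a set $F$ of edges, let $\alpha_F$ be the permutation of $B$ equal to $\alpha$ on $\bigcup F$ and to the identity elsewhere; the tour of $F$ in $\mathcal M$ is the permutation $\tau=\sigma\alpha_F$, i.e. $\tau(b)=\sigma(\alpha(b))$ if $\underline b\in F$ and $\tau(b)=\sigma(b)$ otherwise. A quasi-tree of $\mathcal M$ is a set $F$ of edges whose tour in $\mathcal M$ is a single cycle (a cyclic permutation of all of $B$). *)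

(* Defs.v *)
From mathcomp Require Import all_boot all_fingroup.
Set Implicit Arguments. Unset Strict Implicit. Unset Printing Implicit Defensive.

(* A general map (B, sigma, alpha): B a finite type of flags, sigma alpha
   permutations of B, alpha a fixed-point-free involution. *)
Definition fpf_involution (B : finType) (alpha : {perm B}) : Prop :=
  (forall b, alpha (alpha b) = b) /\ (forall b, alpha b != b).

Definition edge_of (B : finType) (alpha : {perm B}) (b : B) : {set B} :=
  [set b; alpha b].

Definition edges (B : finType) (alpha : {perm B}) : {set {set B}} :=
  [set edge_of alpha b | b : B].

Definition components (B : finType) (sigma alpha : {perm B}) : {set {set B}} :=
  orbit 'P <<[set sigma; alpha]>> @: [set: B].

Definition is_map (B : finType) (sigma alpha : {perm B}) : Prop :=
  #|components sigma alpha| = 1.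

Definition alphaF_fun (B : finType) (alpha : {perm B}) (F : {set {set B}}) (b : B) : B :=
  if edge_of alpha b \in F then alpha b else b.

Definition tour_fun (B : finType) (sigma alpha : {perm B}) (F : {set {set B}}) (b : B) : B :=
  sigma (alphaF_fun alpha F b).

Definition single_cycle (B : finType) (f : B -> B) : Prop :=
  exists tau : {perm B}, (forall b, tau b = f b) /\ #|porbits tau| = 1.

Definition quasi_tree (B : finType) (sigma alpha : {perm B}) (F : {set {set B}}) : Prop :=
  F \subset edges alpha /\ single_cycle (tour_fun sigma alpha F).

(* Main.v *)
Require Import Defs.
From mathcomp Require Import all_boot all_fingroup.
From mathcomp Require Import zify.
From Stdlib Require Import Lia.
Set Implicit Arguments. Unset Strict Implicit. Unset Printing Implicit Defensive.

Section S.
Variables (B : finType) (sigma alpha : {perm B}).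
Hypothesis Ha : fpf_involution alpha.

Lemma aa b : alpha (alpha b) = b. Proof. by case: Ha. Qed.
Lemma an b : alpha b != b. Proof. by case: Ha. Qed.

Lemma edge_alpha b : edge_of alpha (alpha b) = edge_of alpha b.
Proof. by rewrite /edge_of aa setUC. Qed.

Lemma alphaF_inv F x : alphaF_fun alpha F (alphaF_fun alpha F x) = x.
Proof.
rewrite /alphaF_fun; case h: (edge_of alpha x \in F); rewrite ?h //.
by rewrite edge_alpha h aa.
Qed.

Lemma tour_inj F : injective (tour_fun sigma alpha F).
Proof.
move=> x y /perm_inj h.
by rewrite -(alphaF_inv F x) h alphaF_inv.
Qed.

Definition tourp F : {perm B} := perm (@tour_inj F).

Lemma tourpE F x : tourp F x = tour_fun sigma alpha F x.
Proof. by rewrite permE. Qed.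

Local Notation G := (<<[set sigma; alpha]>>%g).

Lemma sigmaG : sigma \in G. Proof. by rewrite mem_gen // set21. Qed.
Lemma alphaG : alpha \in G. Proof. by rewrite mem_gen // set22. Qed.

Lemma orbG g x y : g \in G -> y \in orbit 'P G x -> g y \in orbit 'P G x.
Proof.
move=> gG /orbit_eqP <-.
by have := mem_orbit 'P y gG; rewrite /= apermE.
Qed.

Lemma back F : quasi_tree sigma alpha F -> is_map sigma alpha.
Proof.
case=> _ [tau [Htau H1]].
have [b _] : exists b, b \in [set: B].
  case/eqP/cards1P: H1 => o Ho.
  have : o \in porbits tau by rewrite Ho set11.
  by case/imsetP => b _ _; exists b.
have tauO y : y \in orbit 'P G b -> tau y \in orbit 'P G b.
  move=> hy; rewrite Htau /tour_fun /alphaF_fun.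
  by apply: orbG; [exact: sigmaG| case: ifP => _ //; apply: orbG => //; exact: alphaG].
have allO x : x \in orbit 'P G b.
  have : porbit tau x = porbit tau b.
    case/eqP/cards1P: H1 => o Ho.
    have hx : porbit tau x \in porbits tau by apply: imset_f.
    have hb : porbit tau b \in porbits tau by apply: imset_f.
    by move: hx hb; rewrite Ho !inE => /eqP -> /eqP ->.
  move=> e; have : x \in porbit tau b by rewrite -e porbit_id.
  case/porbitP => i ->; elim: i => [|i IH]; first by rewrite perm1 orbit_refl.
  by rewrite expgSr permM; apply: tauO.
rewrite /is_map /components; apply/eqP/cards1P; exists (orbit 'P G b).
apply/setP => o; rewrite inE; apply/imsetP/eqP => [[x _ ->]|->].
  by apply/orbit_eqP; rewrite allO.
by exists b.
Qed.

Lemma toggle (F : {set {set B}}) b : F \subset edges alpha ->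
  let e := edge_of alpha b in
  let F' := if e \in F then F :\ e else e |: F in
  F' \subset edges alpha /\ tourp F' = (tperm b (alpha b) * tourp F)%g.
Proof.
move=> sF e F'; split.
  rewrite /F'; case: ifP => _.
    by apply: subset_trans sF; apply: subsetDl.
  by rewrite subUset sF sub1set /e /edges imset_f.
apply/permP => x; rewrite permM !tourpE /tour_fun; congr (sigma _).
have memx y : y \in edge_of alpha y by rewrite /edge_of !inE eqxx.
case: (tpermP b (alpha b) x) => [->|->|nb na].
- rewrite /alphaF_fun edge_alpha -/e /F'.
  by case eF: (e \in F); rewrite ?inE ?eqxx ?eF ?aa.
- rewrite /alphaF_fun edge_alpha -/e /F'.
  by case eF: (e \in F); rewrite ?inE ?eqxx ?eF ?aa.
- have ne : edge_of alpha x != e.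
    apply/eqP => ex; have := memx x; rewrite ex /e /edge_of !inE.
    by case/orP => /eqP.
  by rewrite /alphaF_fun /F'; case eF: (e \in F); rewrite ?in_setD1 ?in_setU1 ?(negbTE ne).
Qed.

Lemma inv_group (t : {perm B}) :
  group_set [set g : {perm B} | [forall x, porbit t (g x) == porbit t x]].
Proof.
apply/group_setP; split.
  by rewrite inE; apply/forallP => x; rewrite perm1.
move=> g h; rewrite !inE => /forallP hg /forallP hh; apply/forallP => x.
by rewrite permM (eqP (hh _)) hg.
Qed.

Lemma fwd_step (F : {set {set B}}) : F \subset edges alpha -> is_map sigma alpha ->
  #|porbits (tourp F)| = 1 \/
  exists b, alpha b \notin porbit (tourp F) b.
Proof.
move=> sF hm; set t := tourp F.
case: (boolP [exists b, alpha b \notin porbit t b]) => [/existsP[b hb]|hn].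
  by right; exists b.
left; move: hn; rewrite negb_exists => /forallP hn.
have ha x : porbit t (alpha x) = porbit t x.
  by apply/eqP; rewrite eq_porbit_mem; move: (hn x); rewrite negbK.
have hs x : porbit t (sigma x) = porbit t x.
  have : sigma x = t (alphaF_fun alpha F x) by rewrite tourpE /tour_fun alphaF_inv.
  move=> ->; rewrite -{2}[t]expg1 porbit_perm /alphaF_fun.
  by case: ifP.
pose H := Group (inv_group t).
have GH : G \subset H.
  rewrite gen_subG; apply/subsetP => g; rewrite !inE => /orP[] /eqP ->;
  by apply/forallP => x; rewrite ?ha ?hs.
move: hm; rewrite /is_map /components => /eqP/cards1P [o Ho].
have [b _] : exists b, b \in [set: B].
  have : o \in orbit 'P G @: [set: B] by rewrite Ho set11.
  by case/imsetP => b _ _; exists b.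
have allb x : porbit t x = porbit t b.
  have hx : orbit 'P G x \in orbit 'P G @: [set: B] by apply: imset_f.
  have hb : orbit 'P G b \in orbit 'P G @: [set: B] by apply: imset_f.
  move: hx hb; rewrite Ho !inE => /eqP ex /eqP eb.
  have : x \in orbit 'P G b by rewrite eb -ex orbit_refl.
  case/orbitP => g gG <-; rewrite /= apermE.
  by have := subsetP GH g gG; rewrite inE => /forallP /(_ b) /eqP.
apply/eqP/cards1P; exists (porbit t b); apply/setP => o'; rewrite inE.
apply/imsetP/eqP => [[x _ ->]|->]; first exact: allb.
by exists b.
Qed.

Lemma fwd : is_map sigma alpha -> exists F, quasi_tree sigma alpha F.
Proof.
move=> hm.
suff: forall n (F : {set {set B}}), F \subset edges alpha -> #|porbits (tourp F)| <= n ->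
   exists F, quasi_tree sigma alpha F.
  by move/(_ _ set0 (sub0set _) (leqnn _)).
elim=> [|n IH] F sF hn.
  case: (fwd_step sF hm) => [h|[b _]]; first by rewrite h in hn.
  have : porbit (tourp F) b \in porbits (tourp F) by apply: imset_f.
  by move: hn; rewrite leqn0 cards_eq0 => /eqP ->; rewrite inE.
case: (fwd_step sF hm) => [h|[b hb]].
  by exists F; split => //; exists (tourp F); split => // x; rewrite tourpE.
case: (toggle b sF) => sF' eq.
apply: (IH _ sF'); rewrite eq.
have := porbits_mul_tperm (tourp F) b (alpha b).
rewrite porbit_sym hb eq_sym an /= => e.
  move: hn e => /=; lia.
Qed.

End S.

Theorem lemma2 (B : finType) (sigma alpha : {perm B}) :
  fpf_involution alpha ->
  (is_map sigma alpha <-> exists F : {set {set B}}, quasi_tree sigma alpha F).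
Proof.
move=> Ha; split; first exact: fwd.
by case=> F; apply: back.
Qed.
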